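(* Let $\{a,b\}$ be a $2$-element generating set of an abelian group $G$ (possibly infinite) with $a\ne b$, and let $I=|G:\langle a-b\rangle|$. Then $\mathrm{Cay}(G;a,b)$ has two arc-disjoint two-way infinite hamiltonian paths if and only if $I<\infty$ and there exist $k,\ell\in\{0,1,\ldots,I\}$ such that $k+\ell=I$ and $\langle a-b\rangle=\langle ka+\ell b\rangle=\langle \ell a+kb\rangle$.
   Context: The Cayley digraph $\mathrm{Cay}(G;a,b)$ has vertex set $G$ and an arc from $v$ to $v+s$ for all $v\in G$, $s\in\{a,b\}$. A two-way infinite hamiltonian path is a doubly-infinite sequence $\ldots,v_{-1},v_0,v_1,\ldots$ listing every vertex exactly once with an arc from $v_i$ to $v_{i+1}$ for all $i\in\mathbb{Z}$. Arc-disjoint means sharing no arc. *)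

(* Defs.v *)
From mathcomp Require Import all_boot all_order all_algebra.
Set Implicit Arguments. Unset Strict Implicit. Unset Printing Implicit Defensive.
Import GRing.Theory.
Local Open Scope ring_scope.

Definition cyc (G : zmodType) (x : G) : G -> Prop :=
  fun g => exists n : int, g = x *~ n.

Definition same_subgroup (G : zmodType) (H K : G -> Prop) : Prop :=
  forall g, H g <-> K g.

Definition generates2 (G : zmodType) (a b : G) : Prop :=
  forall g : G, exists m n : int, g = a *~ m + b *~ n.

Definition infinite_zmod (G : zmodType) : Prop :=
  ~ (exists s : seq G, forall g : G, g \in s).

Definition index_is (G : zmodType) (H : G -> Prop) (I : nat) : Prop :=
  exists reps : seq G,
    size reps = I /\
    (forall i j, (i < I)%N -> (j < I)%N -> H (nth 0 reps i - nth 0 reps j) -> i = j) /\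
    (forall g : G, exists2 r, r \in reps & H (g - r)).

Definition two_way_ham_path (G : zmodType) (a b : G) (f : int -> G) : Prop :=
  bijective f /\ forall i : int, f (i + 1) = f i + a \/ f (i + 1) = f i + b.

Definition arc_disjoint (G : zmodType) (f g : int -> G) : Prop :=
  forall i j : int, ~ (f i = g j /\ f (i + 1) = g (j + 1)).

(* Main.v *)
Require Import Defs.
From mathcomp Require Import all_boot all_order all_algebra.
From mathcomp Require Import zify ring.
From Stdlib Require Import IndefiniteDescription.
Import GRing.Theory.
Local Open Scope ring_scope.
Set Implicit Arguments. Unset Strict Implicit.

Inductive zex := ZVar of nat | ZZero | ZAdd of zex & zex | ZOpp of zex
  | ZMulz of zex & int | ZMuln of zex & nat.

Section ZRefl.
Variable G : zmodType.
Fixpoint zeval (env : seq G) (e : zex) : G :=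
  match e with
  | ZVar n => nth 0 env n
  | ZZero => 0
  | ZAdd e1 e2 => zeval env e1 + zeval env e2
  | ZOpp e1 => - zeval env e1
  | ZMulz e1 z => zeval env e1 *~ z
  | ZMuln e1 n => zeval env e1 *+ n
  end.
Fixpoint zcoef (e : zex) (i : nat) : int :=
  match e with
  | ZVar n => if n == i then Posz 1 else Posz 0
  | ZZero => Posz 0
  | ZAdd e1 e2 => zcoef e1 i + zcoef e2 i
  | ZOpp e1 => - zcoef e1 i
  | ZMulz e1 z => zcoef e1 i * z
  | ZMuln e1 n => zcoef e1 i * n%:Z
  end.
Lemma zeval_coef env e :
  zeval env e = \sum_(i < size env) nth 0 env i *~ zcoef e i.
Proof.
elim: e => [n||e1 IH1 e2 IH2|e1 IH|e1 IH z|e1 IH n] /=.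
- case: (ltnP n (size env)) => hn.
    rewrite (bigD1 (Ordinal hn)) //= eqxx mulr1z big1 ?addr0 // => i /eqP hi.
    case: eqP => [e|]; last by rewrite mulr0z.
    by exfalso; apply: hi; apply: val_inj.
  rewrite nth_default // big1 // => i _; case: eqP => [e|]; last by rewrite mulr0z.
  by have := ltn_ord i; rewrite -e ltnNge hn.
- by rewrite big1 // => i _; rewrite mulr0z.
- by rewrite IH1 IH2 -big_split /=; apply: eq_bigr => i _; rewrite mulrzDr.
- by rewrite IH -sumrN; apply: eq_bigr => i _; rewrite mulrNz.
- by rewrite IH mulrz_suml; apply: eq_bigr => i _; rewrite mulrzA.
- by rewrite IH pmulrn mulrz_suml; apply: eq_bigr => i _; rewrite mulrzA.
Qed.
Lemma zeval_eq env e1 e2 :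
  (forall i, (i < size env)%N -> zcoef e1 i = zcoef e2 i) ->
  zeval env e1 = zeval env e2.
Proof.
move=> H; rewrite !zeval_coef; apply: eq_bigr => i _; by rewrite H.
Qed.
End ZRefl.

Ltac zconv x y := constr:(ltac:(first [unify x y; exact true | exact false]) : bool).
Ltac zlookup x env :=
  match env with
  | ?y :: ?env' =>
    let c := zconv x y in
    match c with
    | true => constr:(0%N)
    | false => let n := zlookup x env' in constr:(n.+1)
    end
  end.
Ltac zmem x env :=
  match env with
  | nil => constr:(false)
  | ?y :: ?env' =>
    let c := zconv x y in
    match c with
    | true => constr:(true)
    | false => zmem x env'
    end
  end.
Ltac zcollect t env :=
  match t with
  | @GRing.add _ ?x ?y => let env := zcollect x env in zcollect y env
  | @GRing.opp _ ?x => zcollect x env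
  | @GRing.zero _ => env
  | @intmul _ ?x _ => zcollect x env
  | @GRing.natmul _ ?x _ => zcollect x env
  | _ => let c := zmem t env in
         match c with
         | true => env
         | false => constr:(t :: env)
         end
  end.
Ltac zreify t env :=
  match t with
  | @GRing.add _ ?x ?y => let r1 := zreify x env in let r2 := zreify y env in constr:(ZAdd r1 r2)
  | @GRing.opp _ ?x => let r := zreify x env in constr:(ZOpp r)
  | @GRing.zero _ => constr:(ZZero)
  | @intmul _ ?x ?z => let r := zreify x env in constr:(ZMulz r z)
  | @GRing.natmul _ ?x ?n => let r := zreify x env in constr:(ZMuln r n)
  | _ => let n := zlookup t env in constr:(ZVar n)
  end.
Ltac zclearP := repeat match goal with h : ?T |- _ => lazymatch type of T with Prop => clear h end end.
Ltac zcases n :=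
  match n with
  | O => let i := fresh "i" in intros i ?; lia
  | S ?m => let i := fresh "i" in intro i; destruct i as [|i];
       [intros _; rewrite /= ?eqxx; first [lia | zclearP; first [lia | nia | ring]] | revert i; zcases m]
  end.
Ltac zmodeq :=
  match goal with
  | |- ?l = ?r =>
    let T := type of l in
    let env := zcollect l (@nil T) in
    let env := zcollect r env in
    let el := zreify l env in
    let er := zreify r env in
    change (zeval env el = zeval env er);
    apply: zeval_eq => /=;
    let i := fresh "i" in
    let n := eval compute in (size env) in zcases n
  end.

Goal forall (G : zmodType) (x y z : G) (n m : int),
  x *~ (n + 1) - (y - z) + y = x *~ n + x + z.
Proof. move=> G x y z n m. zmodeq. Qed.


Section Basic.
Variable G : zmodType.
Implicit Types x y h : G.

Lemma cyc0 h : cyc h 0.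
Proof. by exists 0; rewrite mulr0z. Qed.
Lemma cyc_self h : cyc h h.
Proof. by exists 1; rewrite mulr1z. Qed.
Lemma cycD h x y : cyc h x -> cyc h y -> cyc h (x + y).
Proof. by move=> [m ->] [n ->]; exists (m + n); rewrite mulrzDr. Qed.
Lemma cycN h x : cyc h x -> cyc h (- x).
Proof. by move=> [m ->]; exists (- m); rewrite mulrNz. Qed.
Lemma cycB h x y : cyc h x -> cyc h y -> cyc h (x - y).
Proof. by move=> hx hy; apply: cycD => //; apply: cycN. Qed.
Lemma cycZ h x (m : int) : cyc h x -> cyc h (x *~ m).
Proof. by move=> [n ->]; exists (n * m); rewrite mulrzA. Qed.
Lemma cycZn h x (m : nat) : cyc h x -> cyc h (x *+ m).
Proof. by move=> hx; rewrite -mulrz_nat; apply: cycZ. Qed.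
Lemma Hcongr h x y : cyc h x -> x = y -> cyc h y.
Proof. by move=> hx <-. Qed.
Lemma cyc_eqB h x y : cyc h (x - y) -> cyc h (y - x).
Proof. by move=> hx; rewrite -opprB; apply: cycN. Qed.
Lemma cyc_trans h x y z : cyc h (x - y) -> cyc h (y - z) -> cyc h (x - z).
Proof. move=> h1 h2; have := cycD h1 h2; by rewrite addrA subrK. Qed.

Lemma int_ind2 (P : int -> Prop) :
  P 0 -> (forall n, P n -> P (n + 1)) -> (forall n, P n -> P (n - 1)) ->
  forall n, P n.
Proof.
move=> P0 Hs Hp n; case: n => m.
  elim: m => // m IH; have := Hs _ IH; congr P; lia.
elim: m => [|m IH]; first by have := Hp _ P0; rewrite sub0r.
have := Hp _ IH; rewrite !NegzE; congr P; lia.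
Qed.
End Basic.

Section Paths.
Variables (G : zmodType) (a b : G).
Local Notation H := (cyc (a - b)).

Definition steps (F : int -> G) := forall i : int, F (i + 1) = F i + a \/ F (i + 1) = F i + b.

Lemma step_H (F : int -> G) i : steps F -> H (F (i + 1) - F i - a).
Proof.
move=> /(_ i) [->|->].
  have -> : F i + a - F i - a = 0 by zmodeq.
  exact: cyc0.
have -> : F i + b - F i - a = - (a - b) by zmodeq.
apply/cycN/cyc_self.
Qed.

Lemma level (F : int -> G) : steps F -> forall n, H (F n - F 0 - a *~ n).
Proof.
move=> sF; apply: int_ind2.
- have -> : F 0 - F 0 - a *~ 0 = 0 by zmodeq.
  exact: cyc0.
- move=> n IH; have := cycD IH (step_H n sF).
  congr H; zmodeq.
- move=> n IH; have := cycB IH (step_H (n - 1) sF); rewrite subrK.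
  congr H; zmodeq.
Qed.
End Paths.

Lemma divmod_small (I : nat) (q : int) (r : nat) : (r < I)%N ->
  ((q * I%:Z + r%:Z) %/ I%:Z)%Z = q /\ ((q * I%:Z + r%:Z) %% I%:Z)%Z = r%:Z.
Proof.
move=> rI; have I0 : (I%:Z != 0) by apply/eqP; lia.
rewrite divzMDl // modzMDl divz_small ?modz_small ?addr0 //; apply/andP; split; lia.
Qed.

Lemma decomp (I : nat) (n : int) : (0 < I)%N ->
  exists q : int, exists2 r : nat, (r < I)%N & n = q * I%:Z + r%:Z.
Proof.
move=> I0; exists (n %/ I%:Z)%Z; exists (absz (n %% I%:Z)%Z).
  have h1 := @modz_ge0 n I%:Z ltac:(apply/eqP; lia).
  have h2 := @ltz_pmod n I%:Z ltac:(lia).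
  lia.
have h1 := @modz_ge0 n I%:Z ltac:(apply/eqP; lia).
rewrite gez0_abs //; exact: divz_eq.
Qed.

Section Min.
Variables (G : zmodType) (a b : G).
Local Notation H := (cyc (a - b)).

Definition minI (I : nat) := [/\ (0 < I)%N, H (a *+ I) & forall j, (0 < j < I)%N -> ~ H (a *+ j)].

Lemma Hmul_nat (I : nat) (q : int) : H (a *+ I) -> H (a *~ (q * I%:Z)).
Proof.
move=> hI; have := cycZ q hI; congr H; zmodeq.
Qed.

Lemma minI_div I c : minI I -> H (a *~ c) -> exists q : int, c = q * I%:Z.
Proof.
move=> [I0 hI hmin] hc.
have [q [r rI e]] := decomp c I0.
exists q; suff r0 : r = 0%N by rewrite e r0 addr0.
case: (posnP r) => // rpos; exfalso; apply: (hmin r); first by rewrite rpos.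
have := cycB hc (Hmul_nat q hI); congr H; rewrite e pmulrn; zmodeq.
Qed.

Lemma gen_level (gen : generates2 a b) g : exists c : int, H (g - a *~ c).
Proof.
have [m [n ->]] := gen g; exists (m + n); have := cycN (cycZ n (cyc_self (a - b))).
congr H; zmodeq.
Qed.

Lemma mod_red I c : minI I -> exists2 r : nat, (r < I)%N & H (a *~ c - a *+ r).
Proof.
move=> [I0 hI _]; have [q [r rI e]] := decomp c I0.
exists r => //; have := Hmul_nat q hI; congr H; rewrite e; zmodeq.
Qed.

Lemma index_from_min (gen : generates2 a b) I : minI I -> index_is H I.
Proof.
move=> mI; exists (mkseq (fun j => a *+ j) I); split; first by rewrite size_mkseq.
split.
  move=> i j iI jI; rewrite !nth_mkseq // => hij.
  have [q e] : exists q : int, (i%:Z - j%:Z) = q * I%:Z.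
    apply: (minI_div mI); move: hij; congr H; rewrite !pmulrn; zmodeq.
  have : (q <= -1) \/ (q = 0) \/ (1 <= q) by lia.
  case=> [hq|[hq|hq]]; [nia | subst q; lia | nia].
move=> g; have [c hc] := gen_level gen g; have [r rI hr] := mod_red c mI.
exists (a *+ r); first by apply/mapP; exists r => //; rewrite mem_iota.
have := cycD hc hr; congr H; zmodeq.
Qed.

Definition cfun (gen : generates2 a b) (g : G) : int :=
  proj1_sig (constructive_indefinite_description _ (gen_level gen g)).
Lemma cfunP gen g : H (g - a *~ cfun gen g).
Proof. exact: (proj2_sig (constructive_indefinite_description _ (gen_level gen g))). Qed.

Lemma min_from_index (gen : generates2 a b) I :
  index_is H I -> H (a *+ I) -> minI I.
Proof.
move=> [reps [sz [dist cov]]] hI.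
have I0 : (0 < I)%N.
  have [r rin _] := cov 0; rewrite -sz; by case: reps rin {sz dist cov}.
split=> // j /andP [j0 jI] hj.
pose m (i : 'I_I) := cfun gen (nth 0 reps i).
have jz : (j%:Z != 0) by apply/eqP; lia.
have Fp : forall i, (absz ((m i) %% j%:Z)%Z < j)%N.
  move=> i; have h1 := @modz_ge0 (m i) j%:Z jz.
  have h2 := @ltz_pmod (m i) j%:Z ltac:(lia); lia.
pose F (i : 'I_I) : 'I_j := Ordinal (Fp i).
have Finj : injective F.
  move=> i1 i2 /(congr1 val) /= e.
  have e' : ((m i1) %% j%:Z)%Z = ((m i2) %% j%:Z)%Z.
    have h1 := @modz_ge0 (m i1) j%:Z jz; have h2 := @modz_ge0 (m i2) j%:Z jz; lia.
  apply: val_inj; apply: dist; try exact: ltn_ord.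
  have hd : H (a *~ (m i1 - m i2)).
    have -> : m i1 - m i2 = ((m i1 %/ j%:Z)%Z - (m i2 %/ j%:Z)%Z) * j%:Z.
      rewrite {1}(divz_eq (m i1) j%:Z) {1}(divz_eq (m i2) j%:Z) e'; lia.
    exact: Hmul_nat.
  have := cycD (cycB (cfunP gen (nth 0 reps i1)) (cfunP gen (nth 0 reps i2))) hd.
  congr H; rewrite /m; zmodeq.
have := leq_card F Finj; rewrite !card_ord; lia.
Qed.

Lemma H_inf_order (Ginf : infinite_zmod G) I : index_is H I ->
  forall n : int, (a - b) *~ n = 0 -> n = 0.
Proof.
move=> [reps [sz [dist cov]]] n hn; apply/eqP; apply/negPn/negP => n0.
apply: Ginf.
exists [seq r + (a - b) *~ (t%:Z) | r <- reps, t <- iota 0 (absz n)].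
move=> g; have [r rin [m hm]] := cov g.
apply/allpairsP; exists (r, absz (m %% n)%Z) => /=; split => //.
  have h1 := @modz_ge0 m n n0.
  have h2 := @ltz_mod m n n0.
  rewrite mem_iota; lia.
have h1 := @modz_ge0 m n n0.
rewrite gez0_abs //.
have e : (a - b) *~ m = (a - b) *~ (m %% n)%Z.
  rewrite {1}(divz_eq m n) mulrzDr mulrC mulrzA hn mul0rz add0r //.
rewrite -e -hm; zmodeq.
Qed.
End Min.

Lemma inj_surj_bij (A B : Type) (f : A -> B) :
  injective f -> (forall y, exists x, f x = y) -> bijective f.
Proof.
move=> fi fs.
pose g y := proj1_sig (constructive_indefinite_description _ (fs y)).
have gK : cancel g f by move=> y; exact: (proj2_sig (constructive_indefinite_description _ (fs y))).
exists g => // x; apply: fi; by rewrite gK.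
Qed.

Section Construct.
Variables (G : zmodType) (a b : G).
Local Notation H := (cyc (a - b)).

Definition w (x y : G) (k r : nat) := x *+ minn r k + y *+ (r - k).
Definition P (x y : G) (k I : nat) (n : int) :=
  (w x y k I) *~ (n %/ I%:Z)%Z + w x y k (absz (n %% I%:Z)%Z).

Lemma w0 x y k : w x y k 0 = 0.
Proof. by rewrite /w min0n sub0n !mulr0n addr0. Qed.

Lemma w_step x y k r : w x y k r.+1 = w x y k r + (if (r < k)%N then x else y).
Proof.
rewrite /w; case: ltnP => rk.
  have -> : minn r.+1 k = (minn r k).+1 by rewrite !minnE; lia.
  have -> : (r.+1 - k = r - k)%N by lia.
  rewrite mulrSr; zmodeq.
have -> : minn r.+1 k = minn r k by rewrite !minnE; lia.
have -> : (r.+1 - k = (r - k).+1)%N by lia.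
rewrite mulrSr; zmodeq.
Qed.

Lemma P_spec x y k I (q : int) (r : nat) : (r < I)%N ->
  P x y k I (q * I%:Z + r%:Z) = (w x y k I) *~ q + w x y k r.
Proof. move=> rI; rewrite /P; have [-> ->] := divmod_small q rI; done. Qed.

Lemma P_specI x y k I (q : int) : (0 < I)%N ->
  P x y k I (q * I%:Z + I%:Z) = (w x y k I) *~ q + w x y k I.
Proof.
move=> I0; have -> : q * I%:Z + I%:Z = (q + 1) * I%:Z + 0%N%:Z by lia.
rewrite P_spec // w0 mulrzDr mulr1z addr0 //.
Qed.

Lemma P_step x y k I n : (0 < I)%N ->
  exists q : int, exists2 r : nat, (r < I)%N &
   [/\ n = q * I%:Z + r%:Z, P x y k I n = (w x y k I) *~ q + w x y k r &
       P x y k I (n + 1) = P x y k I n + (if (r < k)%N then x else y)].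
Proof.
move=> I0; have [q [r rI e]] := decomp n I0.
exists q; exists r => //; split => //; first by rewrite e P_spec.
rewrite e P_spec //; case: (ltnP r.+1 I) => rI'.
  have -> : q * I%:Z + r%:Z + 1 = q * I%:Z + (r.+1)%:Z by lia.
  rewrite P_spec // w_step; zmodeq.
have rr : r.+1 = I by lia.
have -> : q * I%:Z + r%:Z + 1 = q * I%:Z + I%:Z by lia.
rewrite P_specI // -rr w_step; zmodeq.
Qed.

Lemma P_small x y k I (r : nat) : (r < I)%N -> P x y k I r%:Z = w x y k r.
Proof. move=> rI; have := P_spec x y k 0 rI; rewrite mul0r add0r mulr0z add0r; done. Qed.

Lemma P0 x y k I : (0 < I)%N -> P x y k I 0 = 0.
Proof.
move=> I0; have := P_spec x y k 0 I0; rewrite mul0r add0r => ->.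
by rewrite w0 mulr0z addr0.
Qed.

Definition xy_ok (x y : G) := (x = a /\ y = b) \/ (x = b /\ y = a).

Lemma steps_P x y k I : (0 < I)%N -> xy_ok x y -> steps a b (P x y k I).
Proof.
move=> I0 hxy n; have [q [r rI [_ _ ->]]] := P_step x y k n I0.
case: hxy => [[-> ->]|[-> ->]]; case: ifP => _; by [left | right].
Qed.

Lemma levelP x y k I n : (0 < I)%N -> xy_ok x y -> H (P x y k I n - a *~ n).
Proof.
move=> I0 hxy; have := level (steps_P k I0 hxy) n; rewrite P0 // subr0; done.
Qed.
End Construct.

Section Construct2.
Variables (G : zmodType) (a b : G).
Local Notation H := (cyc (a - b)).

Lemma same_mem (D x : G) : same_subgroup H (cyc D) -> H x -> exists m : int, x = D *~ m.
Proof. move=> s hx; exact: (proj1 (s x) hx). Qed.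

Lemma D_inf_order (D : G) : same_subgroup H (cyc D) ->
  (forall n : int, (a - b) *~ n = 0 -> n = 0) ->
  forall n : int, D *~ n = 0 -> n = 0.
Proof.
move=> s hinf n hn; have [m hm] := same_mem s (cyc_self (a - b)).
apply: hinf; rewrite hm -mulrzA mulrC mulrzA hn mul0rz //.
Qed.

Lemma bij_P (gen : generates2 a b) x y k I :
  minI a b I -> xy_ok a b x y ->
  (forall n : int, (a - b) *~ n = 0 -> n = 0) ->
  same_subgroup H (cyc (w x y k I)) -> bijective (P x y k I).
Proof.
move=> mI hxy hinf s; have I0 : (0 < I)%N by case: mI.
have Dinf := D_inf_order s hinf.
apply: inj_surj_bij.
  move=> n n' e.
  have [q [r rI [en Pn _]]] := P_step x y k n I0.
  have [q' [r' rI' [en' Pn' _]]] := P_step x y k n' I0.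
  have ht : H (a *~ (n' - n)).
    apply: (Hcongr (cycB (@levelP G a b x y k I n I0 hxy) (@levelP G a b x y k I n' I0 hxy))).
    rewrite e; zmodeq.
  have [t et] := minI_div mI ht.
  have rr : r = r'.
    have es : r'%:Z - r%:Z = (t - q' + q) * I%:Z by nia.
    have : (t - q' + q <= -1) \/ (t - q' + q = 0) \/ (1 <= t - q' + q) by lia.
    case=> [h|[h|h]]; [nia | rewrite h mul0r in es; lia | nia].
  subst r'.
  have qq : q = q'.
    apply/eqP; rewrite -subr_eq0; apply/eqP; apply: Dinf.
    have : P x y k I n - P x y k I n' = 0 by rewrite e subrr.
    rewrite Pn Pn' => h; rewrite -h; zmodeq.
  by rewrite en en' qq.
move=> v; have [c hc] := gen_level gen v.
have [r rI hr] := mod_red c mI.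
have hw : H (w x y k r - a *+ r).
  have h := @levelP G a b x y k I r I0 hxy; rewrite P_small // in h.
have hv : H (v - w x y k r).
  have := cycB (cycD hc hr) hw; congr H; zmodeq.
have [q hq] := same_mem s hv.
exists (q * I%:Z + r%:Z); rewrite P_spec // -hq; zmodeq.
Qed.

Lemma arcdisj_P k I : a != b -> minI a b I ->
  arc_disjoint (P a b k I) (P b a k I).
Proof.
move=> ab mI i j [e1 e2]; have I0 : (0 < I)%N by case: mI.
have hab : xy_ok a b a b by left.
have hba : xy_ok a b b a by right.
have [q [r rI [ei Pi Si]]] := P_step a b k i I0.
have [q' [r' rI' [ej Pj Sj]]] := P_step b a k j I0.
have ht : H (a *~ (j - i)).
  have := cycB (@levelP G a b a b k I i I0 hab) (@levelP G a b b a k I j I0 hba).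
  congr H; rewrite e1; zmodeq.
have [t et] := minI_div mI ht.
have rr : r = r'.
  have es : r'%:Z - r%:Z = (t - q' + q) * I%:Z by nia.
  have : (t - q' + q <= -1) \/ (t - q' + q = 0) \/ (1 <= t - q' + q) by lia.
  case=> [h|[h|h]]; [nia | rewrite h mul0r in es; lia | nia].
subst r'.
move: e2; rewrite Si Sj e1 => /addrI.
case: ifP => _ e; move: ab; by rewrite e eqxx.
Qed.
End Construct2.

From Stdlib Require Import Classical.

Section Nec.
Variables (G : zmodType) (a b : G).
Local Notation H := (cyc (a - b)).

Definition sF (F : int -> G) (Fi : G -> int) (v : G) := F (Fi v + 1) - v.

Lemma sF_at F Fi m : cancel F Fi -> sF F Fi (F m) = F (m + 1) - F m.
Proof. by move=> c; rewrite /sF c. Qed.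

Lemma sF_ab F Fi v : cancel Fi F -> steps a b F -> sF F Fi v = a \/ sF F Fi v = b.
Proof.
move=> c st; rewrite /sF; case: (st (Fi v)) => ->; rewrite c; [left|right]; zmodeq.
Qed.

Lemma inj_step F Fi v : a != b -> cancel F Fi -> cancel Fi F ->
  sF F Fi v = a -> sF F Fi (v + (a - b)) = b -> False.
Proof.
move=> ab c1 c2; rewrite /sF => /eqP; rewrite subr_eq => /eqP e1.
move=> /eqP; rewrite subr_eq => /eqP e2.
have e : F (Fi v + 1) = F (Fi (v + (a - b)) + 1) by rewrite e1 e2; zmodeq.
have := congr1 Fi e; rewrite !c1 => /addIr /(congr1 F); rewrite !c2 => e3.
have : a - b = 0 by apply: (@addrI _ v); rewrite addr0 -e3.
by move/eqP; rewrite subr_eq0 (negbTE ab).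
Qed.

Lemma sG_compl f fi g gi v : a != b -> cancel fi f -> cancel gi g ->
  steps a b f -> steps a b g -> arc_disjoint f g ->
  sF g gi v = a + b - sF f fi v.
Proof.
move=> ab cf cg sf sg ad.
have ne : sF f fi v <> sF g gi v.
  rewrite /sF => e; apply: (ad (fi v) (gi v)); split; first by rewrite cf cg.
  by apply: (@addIr _ (- v)).
case: (sF_ab v cf sf) => e1; case: (sF_ab v cg sg) => e2; rewrite e1 e2 in ne *;
  try (by exfalso; apply: ne); zmodeq.
Qed.

Lemma sF_shift f fi g gi v : a != b -> cancel f fi -> cancel fi f ->
  cancel g gi -> cancel gi g ->
  steps a b f -> steps a b g -> arc_disjoint f g ->
  sF f fi (v + (a - b)) = sF f fi v.
Proof.
move=> ab cf1 cf2 cg1 cg2 sf sg ad.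
case: (sF_ab v cf2 sf) => e1; case: (sF_ab (v + (a - b)) cf2 sf) => e2; rewrite e1 e2 //.
  by exfalso; exact: (inj_step ab cf1 cf2 e1 e2).
exfalso; apply: (@inj_step g gi v ab cg1 cg2).
  rewrite (sG_compl _ ab cf2 cg2 sf sg ad) e1; zmodeq.
rewrite (sG_compl _ ab cf2 cg2 sf sg ad) e2; zmodeq.
Qed.

Lemma sF_H f fi g gi u v : a != b -> cancel f fi -> cancel fi f ->
  cancel g gi -> cancel gi g ->
  steps a b f -> steps a b g -> arc_disjoint f g ->
  H (u - v) -> sF f fi u = sF f fi v.
Proof.
move=> ab cf1 cf2 cg1 cg2 sf sg ad [m hm].
have -> : u = v + (a - b) *~ m by rewrite -hm; zmodeq.
elim/int_ind2: m {hm}.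
- by rewrite mulr0z addr0.
- move=> m IH; rewrite -IH -(sF_shift (v + (a - b) *~ m) ab cf1 cf2 cg1 cg2 sf sg ad).
  congr sF; zmodeq.
- move=> m IH; rewrite -IH -(sF_shift (v + (a - b) *~ (m - 1)) ab cf1 cf2 cg1 cg2 sf sg ad).
  congr sF; zmodeq.
Qed.

Lemma tele (F : int -> G) (n : int) (N : nat) :
  F (n + N%:Z) - F n = \sum_(u < N) (F (n + u%:Z + 1) - F (n + u%:Z)).
Proof.
elim: N => [|N IH]; first by rewrite big_ord0 addr0 subrr.
rewrite big_ord_recr /= -IH.
have -> : n + (N.+1)%:Z = n + N%:Z + 1 by lia.
zmodeq.
Qed.

Lemma Uconst (S : int -> G) (I : nat) : (0 < I)%N ->
  (forall j, S (j + I%:Z) = S j) ->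
  forall c, \sum_(u < I) S (c + u%:Z) = \sum_(u < I) S (0 + u%:Z).
Proof.
case: I => // I _ per; elim/int_ind2 => // c IH; rewrite -IH.
- rewrite [in LHS]big_ord_recr [in RHS]big_ord_recl /=.
  have -> : c + 1 + I%:Z = c + (I.+1)%:Z by lia.
  rewrite per addrC; congr (_ + _); first by congr S; lia.
  apply: eq_bigr => u _; congr S; rewrite /bump /=; lia.
- rewrite [in LHS]big_ord_recl [in RHS]big_ord_recr /=.
  have -> : c + I%:Z = c - 1 + (I.+1)%:Z by lia.
  rewrite per addrC; congr (_ + _); first by rewrite addr0.
  apply: eq_bigr => u _; congr S; rewrite /bump /=; lia.
Qed.

Lemma count_sum (n : nat) (X : 'I_n -> G) : (forall u, X u = a \/ X u = b) ->
  exists2 k, (k <= n)%N & \sum_(u < n) X u = a *+ k + b *+ (n - k).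
Proof.
elim: n X => [|n IH] X hX; first by exists 0%N => //; rewrite big_ord0 !mulr0n addr0.
have [k kn e] := IH (fun u => X (widen_ord (leqnSn n) u)) (fun u => hX _).
rewrite big_ord_recr /= e; case: (hX ord_max) => ->.
  exists k.+1 => //; have -> : (n.+1 - k.+1 = n - k)%N by lia.
  rewrite mulrSr; zmodeq.
exists k; first by lia.
have -> : (n.+1 - k = (n - k).+1)%N by lia.
rewrite mulrSr; zmodeq.
Qed.
End Nec.

Section Nec2.
Variables (G : zmodType) (a b : G).
Local Notation H := (cyc (a - b)).

Lemma exists_min N : (0 < N)%N -> H (a *+ N) -> exists I, minI a b I.
Proof.
elim: N {-2}N (leqnn N) => [|N IH] M MN M0 hM; first by lia.
case: (classic (exists j, (0 < j < M)%N /\ H (a *+ j))) => [[j [/andP [j0 jM] hj]]|nj].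
  apply: (IH j) => //; lia.
exists M; split => // j jM hj; apply: nj; by exists j.
Qed.

Lemma subgroup_of_path F Fi I D : cancel F Fi -> cancel Fi F -> steps a b F ->
  minI a b I -> (forall n, F (n + I%:Z) = F n + D) -> same_subgroup H (cyc D).
Proof.
move=> c1 c2 st mI per.
have hI : H (a *+ I) by case: mI.
have Fq : forall q : int, F (q * I%:Z) = F 0 + D *~ q.
  elim/int_ind2.
  - by rewrite mul0r mulr0z addr0.
  - move=> q IH; rewrite mulrDl mul1r per IH; zmodeq.
  - move=> q IH; apply: (@addIr _ D); rewrite -per.
    have -> : (q - 1) * I%:Z + I%:Z = q * I%:Z by lia.
    rewrite IH; zmodeq.
move=> x; split.
  move=> hx; set i := Fi (F 0 + x).
  have Fi_ : F i = F 0 + x by rewrite /i c2.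
  have hi : H (a *~ i).
    apply: (Hcongr (cycB hx (level st i))); rewrite Fi_; zmodeq.
  have [q eq] := minI_div mI hi.
  exists q; apply: (@addrI _ (F 0)); rewrite -Fi_ -Fq -eq //.
move=> [m ->]; apply: cycZ.
have := level st I%:Z; rewrite -[I%:Z]add0r per => h.
apply: (Hcongr (cycD h (Hmul_nat 1 hI))); rewrite mul1r; zmodeq.
Qed.
End Nec2.

Lemma abs_mulH (G : zmodType) (h x : G) (n : int) : cyc h (x *~ n) -> cyc h (x *+ absz n).
Proof.
case: n => m h1; first by rewrite pmulrn.
by move: h1; rewrite NegzE mulrNz => /cycN; rewrite opprK pmulrn.
Qed.

Lemma wI (G : zmodType) (x y : G) k I l : (k + l)%N = I -> w x y k I = x *+ k + y *+ l.
Proof.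
move=> e; rewrite /w; have -> : minn I k = k by rewrite minnE; lia.
by have -> : (I - k = l)%N by lia.
Qed.

Unset Implicit Arguments.

Theorem mainTheorem16 (G : zmodType) (a b : G) :
  infinite_zmod G -> generates2 a b -> a != b ->
  ((exists f g : int -> G,
       two_way_ham_path a b f /\ two_way_ham_path a b g /\ arc_disjoint f g)
   <->
   (exists I : nat, index_is (cyc (a - b)) I /\
      exists k l : nat, (k + l)%N = I /\
        same_subgroup (cyc (a - b)) (cyc (a *+ k + b *+ l)) /\
        same_subgroup (cyc (a - b)) (cyc (a *+ l + b *+ k)))).
Proof.
move=> Ginf gen ab; split.
- move=> [f [g [[bf sf] [[bg sg] ad]]]].
  case: bf => fi cf1 cf2; case: bg => gi cg1 cg2.
  have sf' : steps a b f by [].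
  have sg' : steps a b g by [].
  set n0 := fi (f 0 + (a - b)).
  have fn0 : f n0 = f 0 + (a - b) by rewrite /n0 cf2.
  have hn0 : cyc (a - b) (a *~ n0).
    apply: (Hcongr (cycB (cyc_self (a - b)) (level sf' n0))); rewrite fn0; zmodeq.
  have n0ne : n0 != 0.
    apply/eqP => e; move: fn0; rewrite e => /eqP; rewrite -subr_eq0.
    have -> : f 0 - (f 0 + (a - b)) = - (a - b) by zmodeq.
    by rewrite oppr_eq0 subr_eq0 (negbTE ab).
  have hN := abs_mulH hn0.
  have N0 : (0 < absz n0)%N by rewrite absz_gt0.
  have [I mI] := exists_min N0 hN.
  have I0 : (0 < I)%N by case: mI.
  have hI : cyc (a - b) (a *+ I) by case: mI.
  pose S := fun j : int => sF f fi (a *~ j).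
  have per : forall j, S (j + I%:Z) = S j.
    move=> j; rewrite /S; apply: (sF_H ab cf1 cf2 cg1 cg2 sf' sg' ad).
    apply: (Hcongr (Hmul_nat 1 hI)); rewrite mul1r; zmodeq.
  have [c0 hc0] := gen_level gen (f 0).
  have [c1 hc1] := gen_level gen (g 0).
  have sFf : forall m, sF f fi (f m) = S (c0 + m).
    move=> m; rewrite /S; apply: (sF_H ab cf1 cf2 cg1 cg2 sf' sg' ad).
    apply: (Hcongr (cycD (level sf' m) hc0)); zmodeq.
  have sFg : forall m, sF f fi (g m) = S (c1 + m).
    move=> m; rewrite /S; apply: (sF_H ab cf1 cf2 cg1 cg2 sf' sg' ad).
    apply: (Hcongr (cycD (level sg' m) hc1)); zmodeq.
  pose U := \sum_(u < I) S (0 + u%:Z).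
  have perf : forall n, f (n + I%:Z) = f n + U.
    move=> n; apply: (@addIr _ (- f n)); rewrite [RHS]addrAC subrr add0r tele.
    rewrite /U -(Uconst I0 per (c0 + n)); apply: eq_bigr => u _.
    rewrite -(sF_at (n + u%:Z) cf1) sFf; congr S; lia.
  have perg : forall n, g (n + I%:Z) = g n + ((a + b) *+ I - U).
    move=> n; apply: (@addIr _ (- g n)); rewrite [RHS]addrAC subrr add0r tele.
    rewrite /U -(Uconst I0 per (c1 + n)).
    have -> : (a + b) *+ I = \sum_(u < I) (a + b) by rewrite sumr_const card_ord.
    rewrite -sumrB; apply: eq_bigr => u _.
    rewrite -(sF_at (n + u%:Z) cg1) (sG_compl _ ab cf2 cg2 sf' sg' ad) sFg; congr (_ - S _); lia.
  have [k kI eU] := @count_sum G a b I (fun u : 'I_I => S (0 + u%:Z)) (fun u => sF_ab _ cf2 sf').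
  exists I; split; first apply: (index_from_min gen mI).
  exists k, (I - k)%N; split; first by lia.
  split.
    have := subgroup_of_path cf1 cf2 sf' mI perf; rewrite /U eU //.
  have := subgroup_of_path cg1 cg2 sg' mI perg.
  have -> : (a + b) *+ I - U = a *+ (I - k) + b *+ k by rewrite /U eU; zmodeq.
  done.
- move=> [I [idx [k [l [kl [s1 s2]]]]]].
  have hD : cyc (a - b) (a *+ k + b *+ l) by apply/(s1 _); exact: cyc_self.
  have hI : cyc (a - b) (a *+ I).
    apply: (Hcongr (cycD hD (cycZn l (cyc_self (a - b))))); rewrite -kl; zmodeq.
  have mI := min_from_index gen idx hI.
  have I0 : (0 < I)%N by case: mI.
  have hinf := H_inf_order Ginf idx.
  have hab : xy_ok a b a b by left.
  have hba : xy_ok a b b a by right.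
  have sf : same_subgroup (cyc (a - b)) (cyc (w a b k I)) by rewrite (wI a b kl).
  have sg : same_subgroup (cyc (a - b)) (cyc (w b a k I)) by rewrite (wI b a kl) (addrC (b *+ k)).
  exists (P a b k I), (P b a k I); split; last split.
  + split; first exact: (bij_P gen mI hab hinf sf).
    exact (steps_P k I0 hab).
  + split; first exact: (bij_P gen mI hba hinf sg).
    exact (steps_P k I0 hba).
  + exact: (arcdisj_P ab mI).
Qed.
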